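(* Let $v\equiv 1$ or $7\pmod{24}$ and $n=\frac{v-1}{6}$. If a cyclic three-fold triple system CTS$(v,3)$ has fine structure $(c_1,c_2,c_3)$ with $c_2=t$ and $c_3=s$, then $0\le s\le n$ and $0\le t\le n-s$.
   Context: A cyclic $\lambda$-fold triple system CTS$(v,\lambda)$ is a multiset $\mathcal B$ of 3-element subsets (blocks) of $\mathbb Z_v$ such that every 2-element subset of $\mathbb Z_v$ is contained in exactly $\lambda$ blocks (counted with multiplicity), and $\mathcal B$ is invariant under the translation $x\mapsto x+1$. Thus $\mathcal B$ is a union of translation orbits of 3-subsets with multiplicities; a base block is an orbit representative. The fine structure is $(c_1,\ldots,c_\lambda)$, where $c_i$ is the number of distinct base blocks (orbits) occurring with multiplicity exactly $i$. *)

(* Defs.v *)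
From mathcomp Require Import all_boot.
Unset Printing Implicit Defensive.

(* Points of Z_v are represented by 'I_v; the translation x |-> x+1 (mod v)
   is fintype's [ordS] (value (x.+1) %% v). *)

Definition shift1 (v : nat) (B : {set 'I_v}) : {set 'I_v} := [set @ordS v x | x in B].

Definition shiftk (v : nat) (k : nat) (B : {set 'I_v}) : {set 'I_v} :=
  iter k (shift1 v) B.

Definition orbitB (v : nat) (B : {set 'I_v}) : {set {set 'I_v}} :=
  [set shiftk v k B | k : 'I_v].

(* A multiset of blocks is given by its multiplicity function m.
   is_CTS v lam m : m describes a cyclic lam-fold triple system CTS(v,lam). *)
Definition is_CTS (v lam : nat) (m : {set 'I_v} -> nat) : Prop :=
  [/\ (forall B : {set 'I_v}, 0 < m B -> #|B| = 3),
      (forall x y : 'I_v, x != y ->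
         \sum_(B : {set 'I_v} | (x \in B) && (y \in B)) m B = lam)
    & (forall B : {set 'I_v}, m (shift1 v B) = m B)].

(* c_i : number of distinct translation orbits (base blocks) occurring
   with multiplicity exactly i *)
Definition fine_c (v : nat) (m : {set 'I_v} -> nat) (i : nat) : nat :=
  #|[set orbitB v B | B in [set B : {set 'I_v} | m B == i]]|.

(* Main.v *)
Require Import Defs.
From mathcomp Require Import all_boot all_algebra.
From mathcomp Require Import zify.
Import GRing.Theory.

Section S.
Variable p : nat.
Local Notation T := 'I_p.+1.

Definition tr (e : T) (B : {set T}) : {set T} := [set (x + e)%R | x in B].

Lemma ordS_add (x : T) : ordS x = (x + inZp 1)%R.
Proof. apply: val_inj => /=. by rewrite modnDmr addn1. Qed.

Lemma shift1_tr B : shift1 p.+1 B = tr (inZp 1) B.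
Proof. by apply: eq_imset => x; rewrite ordS_add. Qed.

Lemma tr_comp e f B : tr f (tr e B) = tr (e + f)%R B.
Proof. rewrite /tr -imset_comp; apply: eq_imset => x /=; by rewrite addrA. Qed.

Lemma tr0 B : tr 0%R B = B.
Proof. rewrite /tr (eq_imset _ (fun x => addr0 x)) imset_id //. Qed.

Lemma shiftk_tr k B : shiftk p.+1 k B = tr (inZp k) B.
Proof.
elim: k => [|k IH] /=.
  have -> : inZp 0 = 0%R :> T by apply: val_inj.
  by rewrite tr0.
rewrite /shiftk /= -/(shiftk p.+1 k B) IH shift1_tr tr_comp; congr tr.
apply: val_inj => /=. by rewrite modnDm addn1.
Qed.

Lemma orbitB_tr B : orbitB p.+1 B = [set tr e B | e : T].
Proof. by apply: eq_imset => k; rewrite shiftk_tr valZpK. Qed.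

Lemma orbitB_trE e B : orbitB p.+1 (tr e B) = orbitB p.+1 B.
Proof.
rewrite !orbitB_tr; apply/setP => C; apply/imsetP/imsetP => [[f _ ->]|[f _ ->]].
  by exists (e + f)%R; rewrite ?tr_comp.
by exists (f - e)%R => //; rewrite tr_comp addrC subrK.
Qed.

Lemma mem_orbitB B : B \in orbitB p.+1 B.
Proof. rewrite orbitB_tr; apply/imsetP; exists 0%R => //; by rewrite tr0. Qed.

Lemma tr_inj e : injective (fun x : T => x + e)%R.
Proof. exact: addIr. Qed.

Lemma tr_fix3 (d : T) (B : {set T}) :
  coprime p.+1 3 -> #|B| = 3 -> tr d B = B -> d = 0%R.
Proof.
move=> cop cB h.
have : (\sum_(x in tr d B) x = \sum_(x in B) x)%R by rewrite h.
rewrite /tr big_imset /=; last by move=> x y _ _; apply: addIr.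
rewrite big_split /= sumr_const cB -[X in (_ = X)%R]addr0 => /addrI.
rewrite Zp_mulrn => /(congr1 val) /=.
move/eqP; rewrite -/(dvdn _ _) Gauss_dvdl // => dv.
apply: val_inj => /=.
have := ltn_ord d. move: dv; case: (nat_of_ord d) => // k /dvdn_leq; lia.
Qed.

Variable m : {set T} -> nat.
Hypothesis m3 : forall B : {set T}, 0 < m B -> #|B| = 3.
Hypothesis mpair : forall x y : T, x != y ->
   \sum_(B : {set T} | (x \in B) && (y \in B)) m B = 3.
Hypothesis msh : forall B : {set T}, m (shift1 p.+1 B) = m B.
Hypothesis cop : coprime p.+1 3.

Lemma m_shiftk k B : m (shiftk p.+1 k B) = m B.
Proof. elim: k => //= k IH. by rewrite /shiftk /= msh. Qed.

Lemma m_tr e B : m (tr e B) = m B.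
Proof. by rewrite -(valZpK e) -shiftk_tr m_shiftk. Qed.

Lemma m_orbit B C : C \in orbitB p.+1 B -> m C = m B.
Proof. by rewrite orbitB_tr => /imsetP [e _ ->]; rewrite m_tr. Qed.

Definition x0 : T := ord0.
Definition W0 := [set B : {set T} | (2 <= m B) && (x0 \in B)].
Definition OW := [set orbitB p.+1 B | B in [set B : {set T} | 2 <= m B]].

Lemma W0_bound : 2 * #|W0| <= p.
Proof.
have -> : 2 * #|W0| = \sum_(B in W0) \sum_(y in B :\ x0) 1.
  rewrite -sum1_card big_distrr /=; apply: eq_bigr => B.
  rewrite inE => /andP [h1 h2]; rewrite sum1_card muln1.
  have := cardsD1 x0 B; rewrite h2 m3 //; last by apply: leq_trans h1.
  by case.
rewrite (exchange_big_dep (fun y => y != x0)) /=; last first.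
  by move=> B y _; rewrite !inE => /andP [].
apply: (@leq_trans (\sum_(y : T | y != x0) 1)); last first.
  by rewrite sum1_card cardC1 card_ord.
apply: leq_sum => y yx0.
rewrite sum1_card; apply/card_le1_eqP => B1 B2.
rewrite !unfold_in /= => /andP [h1 h2] /andP [h3 h4].
have : B1 \in W0 := h1. have : y \in B1 :\ x0 := h2.
have : B2 \in W0 := h3. have : y \in B2 :\ x0 := h4.
rewrite !inE => /andP [_ yB2] /andP [mB2 x0B2] /andP [_ yB1] /andP [mB1 x0B1].
apply/eqP; apply/negPn/negP => ne.
have := mpair x0 y; rewrite eq_sym => /(_ yx0).
rewrite (bigD1 B1) /=; last by rewrite x0B1 yB1.
rewrite (bigD1 B2) /=; last by rewrite x0B2 yB2 ne.
lia.
Qed.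

Lemma OW_bound : 3 * #|OW| <= #|W0|.
Proof.
rewrite -[#|W0|]sum1_card (partition_big (fun B => orbitB p.+1 B) (fun O => O \in OW)) /=;
  last first.
  by move=> B; rewrite inE => /andP [h _]; apply/imsetP; exists B; rewrite ?inE.
rewrite -sum1_card big_distrr /= muln1; apply: leq_sum => O /imsetP [B0].
rewrite inE => mB0 ->.
rewrite sum1_card.
have cB0 : #|B0| = 3 by apply: m3; apply: leq_trans mB0.
rewrite -{1}cB0 -(@card_in_imset _ _ (fun y => tr (x0 - y)%R B0)); last first.
  move=> y1 y2 _ _ /= h.
  have := congr1 (tr (y2 - x0)%R) h; rewrite !tr_comp.
  have -> : (x0 - y2 + (y2 - x0) = 0)%R by rewrite addrA subrK subrr.
  rewrite tr0 => /(tr_fix3 _ _ cop cB0) /eqP.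
  rewrite addrC addrA subrK subr_eq0 => /eqP ->. by [].
apply: subset_leq_card; apply/subsetP => C /imsetP [y yB0 ->].
rewrite unfold_in /= orbitB_trE eqxx andbT inE m_tr mB0 /=.
apply/imsetP; exists y => //; by rewrite addrC subrK.
Qed.
End S.

Lemma fine_sum p (m : {set 'I_p.+1} -> nat) :
  (forall B : {set 'I_p.+1}, m (shift1 p.+1 B) = m B) ->
  fine_c p.+1 m 2 + fine_c p.+1 m 3 <= #|OW p m|.
Proof.
move=> msh; rewrite /fine_c.
set A := [set _ | _ in _]; set C := [set _ | _ in _].
have dis : A :&: C = set0.
  apply/setP => O; rewrite !inE; apply/negP => /andP [/imsetP [B1 + ->] /imsetP [B2 + e]].
  rewrite !inE => /eqP h1 /eqP h2.
  have := @mem_orbitB p B1; rewrite e => /(@m_orbit p m msh); lia.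
have -> : #|A| + #|C| = #|A :|: C| by rewrite cardsU dis cards0 subn0.
apply: subset_leq_card; apply/subsetP => O; rewrite inE => /orP [] /imsetP [B + ->];
  rewrite inE => /eqP h; apply/imsetP; exists B => //; by rewrite inE h.
Qed.

Theorem mainTheorem7 (v : nat) (m : {set 'I_v} -> nat) (t s : nat) :
  (v %% 24 = 1 \/ v %% 24 = 7) ->
  is_CTS v 3 m ->
  fine_c v m 2 = t -> fine_c v m 3 = s ->
  let n := (v - 1) %/ 6 in
  0 <= s <= n /\ 0 <= t <= n - s.
Proof.
case: v m => [|p] m hv; first by case: hv.
case=> m3 mpair msh ht hs n.
have cop : coprime p.+1 3.
  rewrite coprime_sym prime_coprime //.
  apply/negP => /dvdnP [k hk]; move: hv; rewrite hk; lia.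
have h1 := @fine_sum p m msh.
have h2 := @OW_bound p m m3 msh cop.
have h3 := @W0_bound p m m3 mpair.
have hp : 6 %| p by move: hv; lia.
have : s + t <= n.
  rewrite /n.
  rewrite ht hs in h1; lia.
lia.
Qed.
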